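(* Let $A$ be a Banach algebra which does not consist entirely of right (resp. left) topological divisors of zero. If $A$ has a left (resp. right) approximate identity (not necessarily bounded), then $A$ has a left (resp. right) unit. In particular, if moreover $A$ is commutative, then $A$ is unital. *)

(* Defs.v *)
From Stdlib Require Import Reals.
Open Scope R_scope.

Record BanachAlgebra := {
  ba_car :> Type;
  ba_zero : ba_car;
  ba_add : ba_car -> ba_car -> ba_car;
  ba_opp : ba_car -> ba_car;
  ba_scal : R -> ba_car -> ba_car;
  ba_mul : ba_car -> ba_car -> ba_car;
  ba_norm : ba_car -> R;
  ba_addA : forall x y z, ba_add x (ba_add y z) = ba_add (ba_add x y) z;
  ba_addC : forall x y, ba_add x y = ba_add y x;
  ba_add0 : forall x, ba_add ba_zero x = x;
  ba_addN : forall x, ba_add x (ba_opp x) = ba_zero;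
  ba_scalA : forall a b x, ba_scal a (ba_scal b x) = ba_scal (a * b) x;
  ba_scal1 : forall x, ba_scal 1 x = x;
  ba_scalDr : forall a x y, ba_scal a (ba_add x y) = ba_add (ba_scal a x) (ba_scal a y);
  ba_scalDl : forall a b x, ba_scal (a + b) x = ba_add (ba_scal a x) (ba_scal b x);
  ba_mulA : forall x y z, ba_mul x (ba_mul y z) = ba_mul (ba_mul x y) z;
  ba_mulDl : forall x y z, ba_mul (ba_add x y) z = ba_add (ba_mul x z) (ba_mul y z);
  ba_mulDr : forall x y z, ba_mul x (ba_add y z) = ba_add (ba_mul x y) (ba_mul x z);
  ba_mulZl : forall a x y, ba_mul (ba_scal a x) y = ba_scal a (ba_mul x y);
  ba_mulZr : forall a x y, ba_mul x (ba_scal a y) = ba_scal a (ba_mul x y);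
  ba_norm_ge0 : forall x, 0 <= ba_norm x;
  ba_norm_eq0 : forall x, ba_norm x = 0 -> x = ba_zero;
  ba_norm_triangle : forall x y, ba_norm (ba_add x y) <= ba_norm x + ba_norm y;
  ba_normZ : forall a x, ba_norm (ba_scal a x) = Rabs a * ba_norm x;
  ba_norm_mul : forall x y, ba_norm (ba_mul x y) <= ba_norm x * ba_norm y;
  ba_complete : forall u : nat -> ba_car,
    (forall eps, eps > 0 -> exists N, forall n m, (n >= N)%nat -> (m >= N)%nat ->
        ba_norm (ba_add (u n) (ba_opp (u m))) < eps) ->
    exists l, forall eps, eps > 0 -> exists N, forall n, (n >= N)%nat ->
        ba_norm (ba_add (u n) (ba_opp l)) < eps
}.

Section Defs.
Variable A : BanachAlgebra.

Definition ba_sub (x y : A) : A := ba_add A x (ba_opp A y).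

Definition seq_to0 (u : nat -> A) : Prop :=
  forall eps, eps > 0 -> exists N, forall n, (n >= N)%nat -> ba_norm A (u n) < eps.

Definition right_tdz (a : A) : Prop :=
  exists x : nat -> A, (forall n, ba_norm A (x n) = 1) /\ seq_to0 (fun n => ba_mul A (x n) a).

Definition left_tdz (a : A) : Prop :=
  exists x : nat -> A, (forall n, ba_norm A (x n) = 1) /\ seq_to0 (fun n => ba_mul A a (x n)).

End Defs.

Definition directed {I : Type} (le : I -> I -> Prop) : Prop :=
  inhabited I /\ (forall i, le i i) /\
  (forall i j k, le i j -> le j k -> le i k) /\
  (forall i j, exists k, le i k /\ le j k).

Definition net_lim (A : BanachAlgebra) {I : Type} (le : I -> I -> Prop)
  (f : I -> A) (l : A) : Prop :=
  forall eps, eps > 0 -> exists i0, forall i, le i0 i -> ba_norm A (ba_sub A (f i) l) < eps.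

Definition has_left_approx_id (A : BanachAlgebra) : Prop :=
  exists (I : Type) (le : I -> I -> Prop) (e : I -> A),
    directed le /\ forall x : A, net_lim A le (fun i => ba_mul A (e i) x) x.

Definition has_right_approx_id (A : BanachAlgebra) : Prop :=
  exists (I : Type) (le : I -> I -> Prop) (e : I -> A),
    directed le /\ forall x : A, net_lim A le (fun i => ba_mul A x (e i)) x.

Definition has_left_unit (A : BanachAlgebra) : Prop :=
  exists e : A, forall x : A, ba_mul A e x = x.

Definition has_right_unit (A : BanachAlgebra) : Prop :=
  exists e : A, forall x : A, ba_mul A x e = x.

Definition is_unital (A : BanachAlgebra) : Prop :=
  exists e : A, forall x : A, ba_mul A e x = x /\ ba_mul A x e = x.

Definition is_commutative (A : BanachAlgebra) : Prop :=
  forall x y : A, ba_mul A x y = ba_mul A y x.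

(* Main.v *)
Require Import Defs.
From Stdlib Require Import Reals Lra Lia ZArith ClassicalEpsilon Classical.
Open Scope R_scope.

Lemma add_cancel {A : BanachAlgebra} (x y z : A) :
  ba_add A x y = ba_add A x z -> y = z.
Proof.
  intro H.
  assert (K : forall w : A, ba_add A (ba_opp A x) (ba_add A x w) = w).
  { intro w. rewrite ba_addA, (ba_addC A (ba_opp A x)), ba_addN, ba_add0. reflexivity. }
  rewrite <- (K y), <- (K z), H. reflexivity.
Qed.

Lemma add0r {A : BanachAlgebra} (x : A) : ba_add A x (ba_zero A) = x.
Proof. rewrite ba_addC. apply ba_add0. Qed.

Lemma scal0 {A : BanachAlgebra} (x : A) : ba_scal A 0 x = ba_zero A.
Proof.
  apply (add_cancel (ba_scal A 0 x)).
  rewrite add0r, <- ba_scalDl, Rplus_0_r. reflexivity.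
Qed.

Lemma opp_scal {A : BanachAlgebra} (x : A) : ba_opp A x = ba_scal A (-1) x.
Proof.
  apply (add_cancel x). rewrite ba_addN.
  rewrite <- (ba_scal1 A x) at 1. rewrite <- ba_scalDl.
  replace (1 + -1) with 0 by ring. rewrite scal0. reflexivity.
Qed.

Lemma norm_opp {A : BanachAlgebra} (x : A) : ba_norm A (ba_opp A x) = ba_norm A x.
Proof.
  rewrite opp_scal, ba_normZ. rewrite Rabs_left by lra. ring.
Qed.

Lemma opp_add {A : BanachAlgebra} (x y : A) :
  ba_opp A (ba_add A x y) = ba_add A (ba_opp A x) (ba_opp A y).
Proof. rewrite !opp_scal. apply ba_scalDr. Qed.

Lemma opp_opp {A : BanachAlgebra} (x : A) : ba_opp A (ba_opp A x) = x.
Proof. rewrite !opp_scal, ba_scalA. replace (-1 * -1) with 1 by ring. apply ba_scal1. Qed.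

Lemma norm_sub_sym {A : BanachAlgebra} (x y : A) :
  ba_norm A (ba_sub A x y) = ba_norm A (ba_sub A y x).
Proof.
  rewrite <- norm_opp. unfold ba_sub. rewrite opp_add, opp_opp, ba_addC. reflexivity.
Qed.

Lemma mul_subl {A : BanachAlgebra} (x y z : A) :
  ba_mul A (ba_sub A x y) z = ba_sub A (ba_mul A x z) (ba_mul A y z).
Proof.
  unfold ba_sub. rewrite ba_mulDl, !opp_scal, ba_mulZl. reflexivity.
Qed.

Lemma sub_split {A : BanachAlgebra} (x y z : A) :
  ba_sub A x z = ba_add A (ba_sub A x y) (ba_sub A y z).
Proof.
  unfold ba_sub.
  rewrite <- ba_addA. rewrite (ba_addA A (ba_opp A y)).
  rewrite (ba_addC A (ba_opp A y) y), ba_addN, ba_add0. reflexivity.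
Qed.

Lemma norm_sub_tri {A : BanachAlgebra} (x y z : A) :
  ba_norm A (ba_sub A x z) <= ba_norm A (ba_sub A x y) + ba_norm A (ba_sub A y z).
Proof. rewrite (sub_split x y z). apply ba_norm_triangle. Qed.

Lemma sub_eq0 {A : BanachAlgebra} (x y : A) : ba_sub A x y = ba_zero A -> x = y.
Proof.
  intro H. unfold ba_sub in H.
  assert (E : ba_add A (ba_add A x (ba_opp A y)) y = x).
  { rewrite <- ba_addA, (ba_addC A (ba_opp A y)), ba_addN, add0r. reflexivity. }
  rewrite H, ba_add0 in E. auto.
Qed.

Lemma small_eq {A : BanachAlgebra} (x y : A) :
  (forall eps, eps > 0 -> ba_norm A (ba_sub A x y) < eps) -> x = y.
Proof.
  intro H. apply sub_eq0, ba_norm_eq0.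
  pose proof (ba_norm_ge0 A (ba_sub A x y)).
  destruct (Req_dec (ba_norm A (ba_sub A x y)) 0) as [E|E]; auto.
  specialize (H (ba_norm A (ba_sub A x y))). lra.
Qed.

Lemma arch (r : R) : r > 0 -> exists N : nat, / INR (S N) < r.
Proof.
  intro Hr. destruct (archimed (/ r)) as [H1 _].
  assert (Hp : / r > 0) by (apply Rinv_0_lt_compat; lra).
  exists (Z.to_nat (up (/ r))).
  assert (HZ : (0 <= up (/ r))%Z).
  { apply le_IZR. lra. }
  assert (E : INR (Z.to_nat (up (/ r))) = IZR (up (/ r))).
  { rewrite INR_IZR_INZ, Z2Nat.id; auto. }
  rewrite S_INR, E.
  assert (Hq : / (IZR (up (/ r)) + 1) < / / r).
  { apply Rinv_lt_contravar; [ apply Rmult_lt_0_compat; lra | lra ]. }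
  rewrite Rinv_inv in Hq. exact Hq.
Qed.

Lemma inv_S_mono (n N : nat) : (n >= N)%nat -> / INR (S n) <= / INR (S N).
Proof.
  intro H. apply Rinv_le_contravar. apply lt_0_INR; lia. apply le_INR; lia.
Qed.

Lemma not_rtdz_bound {A : BanachAlgebra} (a : A) : ~ right_tdz A a ->
  exists c, c > 0 /\ forall x : A, c * ba_norm A x <= ba_norm A (ba_mul A x a).
Proof.
  intro H. apply NNPP. intro Hn.
  assert (Hx : forall n : nat, exists x : A,
    ba_norm A (ba_mul A x a) < / INR (S n) * ba_norm A x).
  { intro n. apply NNPP. intro Hm. apply Hn. exists (/ INR (S n)). split.
    - apply Rinv_0_lt_compat, lt_0_INR; lia.
    - intro x. apply Rnot_lt_le. intro Hl. apply Hm. exists x. exact Hl. }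
  apply H.
  exists (fun n => ba_scal A (/ ba_norm A (proj1_sig (constructive_indefinite_description _ (Hx n))))
                          (proj1_sig (constructive_indefinite_description _ (Hx n)))).
  assert (Hpos : forall n, ba_norm A (proj1_sig (constructive_indefinite_description _ (Hx n))) > 0).
  { intro n. destruct (constructive_indefinite_description _ (Hx n)) as [x Hxn]. simpl.
    pose proof (ba_norm_ge0 A (ba_mul A x a)).
    pose proof (ba_norm_ge0 A x).
    destruct (Req_dec (ba_norm A x) 0) as [E|E]; [rewrite E in Hxn; lra | lra]. }
  split.
  - intro n. specialize (Hpos n). revert Hpos.
    destruct (constructive_indefinite_description _ (Hx n)) as [x Hxn]. simpl. intro Hp.
    rewrite ba_normZ, Rabs_right. field. lra.
    apply Rle_ge, Rlt_le, Rinv_0_lt_compat; lra.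
  - intros eps Heps. destruct (arch eps Heps) as [N HN]. exists N. intros n Hnn.
    specialize (Hpos n). revert Hpos.
    destruct (constructive_indefinite_description _ (Hx n)) as [x Hxn]. simpl. intro Hp.
    rewrite ba_mulZl, ba_normZ, Rabs_right.
    2: apply Rle_ge, Rlt_le, Rinv_0_lt_compat; lra.
    pose proof (inv_S_mono n N Hnn).
    apply Rmult_lt_compat_l with (r := / ba_norm A x) in Hxn.
    2: apply Rinv_0_lt_compat; lra.
    replace (/ ba_norm A x * (/ INR (S n) * ba_norm A x)) with (/ INR (S n)) in Hxn
      by (field; repeat split; try lra; apply not_0_INR; lia).
    lra.
Qed.

Lemma part1 (A : BanachAlgebra) :
  (exists a : A, ~ right_tdz A a) -> has_left_approx_id A -> has_left_unit A.
Proof.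
  intros [a Ha] [I [le [e [Hdir H]]]].
  destruct (not_rtdz_bound a Ha) as [c [Hc Hb]].
  destruct Hdir as [_ [Hrefl [_ Hjoin]]].
  assert (Key : forall z w : A, c * ba_norm A (ba_sub A z w) <=
     ba_norm A (ba_sub A (ba_mul A z a) a) + ba_norm A (ba_sub A (ba_mul A w a) a)).
  { intros z w. eapply Rle_trans. apply Hb. rewrite mul_subl.
    rewrite (norm_sub_sym (ba_mul A w a)). apply norm_sub_tri. }
  assert (Hj : forall n : nat, exists i0, forall i, le i0 i ->
      ba_norm A (ba_sub A (ba_mul A (e i) a) a) < / INR (S n)).
  { intro n. apply (H a). apply Rinv_0_lt_compat, lt_0_INR; lia. }
  set (j := fun n => proj1_sig (constructive_indefinite_description _ (Hj n))).
  assert (Hjn : forall n i, le (j n) i ->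
      ba_norm A (ba_sub A (ba_mul A (e i) a) a) < / INR (S n)).
  { intro n. unfold j. destruct (constructive_indefinite_description _ (Hj n)). auto. }
  set (u := fun n => e (j n)).
  destruct (ba_complete A u) as [l Hl].
  { intros eps Heps. destruct (arch (c * eps / 2)) as [N HN].
    { apply Rmult_lt_0_compat; [apply Rmult_lt_0_compat|]; lra. }
    exists N. intros n m Hn Hm.
    pose proof (Key (u n) (u m)) as K.
    pose proof (Hjn n (j n) (Hrefl _)). pose proof (Hjn m (j m) (Hrefl _)).
    pose proof (inv_S_mono n N Hn). pose proof (inv_S_mono m N Hm).
    unfold u in *.
    assert (Hlt : c * ba_norm A (ba_sub A (e (j n)) (e (j m))) < c * eps) by lra.
    unfold ba_sub in Hlt. apply Rmult_lt_reg_l in Hlt; auto. }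
  exists l. intro x. apply small_eq. intros eps Heps.
  set (M := ba_norm A x + 1).
  assert (HM : M > 0) by (pose proof (ba_norm_ge0 A x); unfold M; lra).
  set (d := eps / (4 * M)).
  assert (Hd : d > 0) by (unfold d; apply Rdiv_lt_0_compat; lra).
  destruct (Hl d Hd) as [N1 HN1].
  destruct (arch (c * d / 2)) as [N2 HN2].
  { apply Rmult_lt_0_compat; [apply Rmult_lt_0_compat|]; lra. }
  set (n := max N1 N2).
  destruct (H x d Hd) as [ix Hix].
  destruct (Hjoin (j n) ix) as [i [Hi1 Hi2]].
  specialize (HN1 n ltac:(unfold n; lia)).
  pose proof (inv_S_mono n N2 ltac:(unfold n; lia)).
  pose proof (Key (u n) (e i)) as K.
  pose proof (Hjn n (j n) (Hrefl _)). pose proof (Hjn n i Hi1).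
  specialize (Hix i Hi2).
  fold (u n) in H1.
  assert (Hun : c * ba_norm A (ba_sub A (u n) (e i)) < c * d) by lra.
  apply Rmult_lt_reg_l in Hun; auto.
  pose proof (norm_sub_tri (ba_mul A l x) (ba_mul A (u n) x) x) as T1.
  pose proof (norm_sub_tri (ba_mul A (u n) x) (ba_mul A (e i) x) x) as T2.
  rewrite <- !mul_subl in T1, T2.
  pose proof (ba_norm_mul A (ba_sub A l (u n)) x) as B1.
  pose proof (ba_norm_mul A (ba_sub A (u n) (e i)) x) as B2.
  rewrite norm_sub_sym in B1. fold (ba_sub A (u n) l) in HN1.
  pose proof (ba_norm_ge0 A x).
  pose proof (ba_norm_ge0 A (ba_sub A (u n) l)).
  pose proof (ba_norm_ge0 A (ba_sub A (u n) (e i))).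
  assert (ba_norm A (ba_sub A (u n) l) * ba_norm A x <= d * M).
  { apply Rmult_le_compat; unfold M; lra. }
  assert (ba_norm A (ba_sub A (u n) (e i)) * ba_norm A x <= d * M).
  { apply Rmult_le_compat; unfold M; lra. }
  assert (d * M = eps / 4) by (unfold d; field; lra).
  assert (d <= eps / 4).
  { unfold d. apply Rmult_le_compat_l; [lra|]. apply Rinv_le_contravar; unfold M; lra. }
  lra.
Qed.

Definition opA (A : BanachAlgebra) : BanachAlgebra.
Proof.
  refine {| ba_car := ba_car A; ba_zero := ba_zero A; ba_add := ba_add A;
            ba_opp := ba_opp A; ba_scal := ba_scal A;
            ba_mul := fun x y => ba_mul A y x; ba_norm := ba_norm A |}.
  - apply ba_addA. - apply ba_addC. - apply ba_add0. - apply ba_addN.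
  - apply ba_scalA. - apply ba_scal1. - apply ba_scalDr. - apply ba_scalDl.
  - intros. symmetry. apply ba_mulA.
  - intros. apply ba_mulDr. - intros. apply ba_mulDl.
  - intros. apply ba_mulZr. - intros. apply ba_mulZl.
  - apply ba_norm_ge0. - apply ba_norm_eq0. - apply ba_norm_triangle.
  - apply ba_normZ. - intros. rewrite Rmult_comm. apply ba_norm_mul.
  - apply ba_complete.
Defined.

Theorem mainTheorem5 (A : BanachAlgebra) :
  ((exists a : A, ~ right_tdz A a) -> has_left_approx_id A -> has_left_unit A) /\
  ((exists a : A, ~ left_tdz A a) -> has_right_approx_id A -> has_right_unit A) /\
  (is_commutative A -> (exists a : A, ~ right_tdz A a) ->
     has_left_approx_id A -> is_unital A).
Proof.
  split; [|split].
  - apply part1.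
  - exact (part1 (opA A)).
  - intros Hc Ha Hl. destruct (part1 A Ha Hl) as [e He].
    exists e. intro x. split; auto. rewrite Hc. auto.
Qed.
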